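(* Let $n\ge1$; for $i\in[n]$ let $d_i\ge1$ be an integer, $p_{i0}<\cdots<p_{id_i}$ reals, $\mathcal{X}=\prod_i\{p_{i0},\dots,p_{id_i}\}$, and $f_i:\{p_{i0},\dots,p_{id_i}\}\to[L_i,U_i]$. Let $\phi:\prod_i[L_i,U_i]\to\mathbb{R}$ be supermodular. Let $\sigma=(\sigma_1,\dots,\sigma_n)$ where each $\sigma_i$ is a permutation of $\{0,\dots,d_i\}$ with $f_i(p_{i,\sigma_i(0)})\le f_i(p_{i,\sigma_i(1)})\le\cdots\le f_i(p_{i,\sigma_i(d_i)})$, and let $\psi^\sigma(\boldsymbol{j})=\phi(f_1(p_{1,\sigma_1(j_1)}),\dots,f_n(p_{n,\sigma_n(j_n)}))$ for $\boldsymbol{j}\in\mathcal{G}$. Then the set $$E=\Bigl\{(\boldsymbol{x},\boldsymbol{z},\mu):\boldsymbol{z}\in\{0,1\}^N,\ (x_i,\boldsymbol{z}_i)\in B_i\ \forall i,\ \boldsymbol{z}'=(L^\sigma)^{-1}(\boldsymbol{z}),\ \mu\le\psi^\sigma(\boldsymbol{j}^0)+\sum_{t\in[N]}\bigl(\psi^\sigma(\boldsymbol{j}^t)-\psi^\sigma(\boldsymbol{j}^{t-1})\bigr)z'_{\pi_t}\ \forall\pi\in\Pi\Bigr\}$$ (where for each $\pi$, $\boldsymbol{j}^0,\dots,\boldsymbol{j}^N$ is its point representation) is an ideal MIP formulation of the hypograph $\{(\boldsymbol{x},\mu)\in\mathcal{X}\times\mathbb{R}:\mu\le\phi(f_1(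x_1),\dots,f_n(x_n))\}$.
   Context: $[n]=\{1,\dots,n\}$, $N=\sum_i d_i$. A function $g$ on a set $X\subseteq\mathbb{R}^n$ closed under componentwise max $\vee$ and min $\wedge$ is supermodular if $g(\boldsymbol{x}\vee\boldsymbol{y})+g(\boldsymbol{x}\wedge\boldsymbol{y})\ge g(\boldsymbol{x})+g(\boldsymbol{y})$ for all $\boldsymbol{x},\boldsymbol{y}$. $\Delta^d=\{\boldsymbol{z}\in\mathbb{R}^d:1\ge z_1\ge\cdots\ge z_d\ge0\}$; variables $\boldsymbol{z}=(\boldsymbol{z}_1,\dots,\boldsymbol{z}_n)$, $\boldsymbol{z}_i\in\mathbb{R}^{d_i}$. $B_i=\{(x_i,\boldsymbol{z}_i):x_i=p_{i0}+\sum_{j\in[d_i]}(p_{ij}-p_{i,j-1})z_{ij},\ \boldsymbol{z}_i\in\Delta^{d_i}\}$. $\mathcal{G}=\prod_i\{0,1,\dots,d_i\}$. A staircase is a sequence $\pi=(\pi_1,\dots,\pi_N)$ with $\pi_t=(\pi_t(1),\pi_t(2))$, $\pi_t(1)\in[n]$, each $i$ occurring as $\pi_t(1)$ for exactly $d_i$ values of $t$, and $\pi_t(2)=|\{s\le t:\pi_s(1)=\pi_t(1)\}|$; $\Pi$ is the set of all staircases; $z'_{\pi_t}:=z'_{\pi_t(1),\pi_t(2)}$. Its point representation is $\boldsymbol{j}^0=(0,\dots,0)$, $\boldsymbol{j}^t=\boldsymbol{j}^{t-1}+\boldsymbol{e}_{\pi_t(1)}$ ($\boldsymbol{e}_i$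 the $i$-th unit vector of $\mathbb{R}^n$). For each $i$, let $T_i:\mathbb{R}^{d_i}\to\mathbb{R}^{d_i+1}$, $\lambda_{ij}=z_{ij}-z_{i,j+1}$ for $j=0,\dots,d_i$ with conventions $z_{i0}=1$, $z_{i,d_i+1}=0$; its inverse is $z_{ij}=\sum_{k=j}^{d_i}\lambda_{ik}$, $j\in[d_i]$. Let $P^{\sigma_i}\in\mathbb{R}^{(d_i+1)\times(d_i+1)}$ have entry $(j,k)$ equal to $1$ if $j=\sigma_i(k)$ and $0$ otherwise. Define $L^{\sigma_i}(\boldsymbol{z}'_i)=T_i^{-1}(P^{\sigma_i}T_i(\boldsymbol{z}'_i))$ and $L^\sigma(\boldsymbol{z}')=(L^{\sigma_1}(\boldsymbol{z}'_1),\dots,L^{\sigma_n}(\boldsymbol{z}'_n))$, an invertible affine map with inverse $(L^\sigma)^{-1}$. An MIP formulation of a set $S$ is a polyhedron with binary restrictions on some variables whose projection onto the original variables equals $S$; it is ideal if every vertex of the LP relaxation (binary restrictions dropped) has those variables binary. *)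

(* Defs.v *)
From HB Require Import structures.
From mathcomp Require Import all_boot all_order all_algebra.
From mathcomp Require Import fingroup perm.
From mathcomp Require Import reals.
Set Implicit Arguments. Unset Strict Implicit. Unset Printing Implicit Defensive.
Import Order.TTheory GRing.Theory Num.Theory.
Local Open Scope ring_scope.

(* Indexing conventions: [n] is 'I_n; the paper's index j in [d] (1-based)
   of z_i in R^{d_i} is stored at position j-1 of 'I_(d_i) -> R;
   p_{i0..id_i}, permutations and lambda use 'I_(d_i).+1 (0-based, 0..d_i). *)

Section Defs.
Variable R : realType.

(* nat-indexed view of z in R^d with conventions z_0 = 1, z_{d+1} = 0
   (and, harmlessly, 0 beyond); zext z j = z_j for j in [d]. *)
Definition zext (d : nat) (z : 'I_d -> R) (j : nat) : R :=
  if j == 0%N then 1 else oapp z 0 (insub j.-1 : option 'I_d).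

Definition Tmap (d : nat) (z : 'I_d -> R) : 'I_d.+1 -> R :=
  fun j => zext z j - zext z j.+1.

Definition Pmap (d : nat) (s : {perm 'I_d.+1}) (lam : 'I_d.+1 -> R) : 'I_d.+1 -> R :=
  fun j => \sum_(k < d.+1) (if j == s k then 1 else 0) * lam k.

Definition Tinv (d : nat) (lam : 'I_d.+1 -> R) : 'I_d -> R :=
  fun j => \sum_(k < d.+1 | (j.+1 <= k)%N) lam k.

Definition Lsig (d : nat) (s : {perm 'I_d.+1}) (z : 'I_d -> R) : 'I_d -> R :=
  Tinv (Pmap s (Tmap z)).

(* z in Delta^d : 1 >= z_1 >= ... >= z_d >= 0 *)
Definition in_Delta (d : nat) (z : 'I_d -> R) : Prop :=
  forall j : nat, (j <= d)%N -> zext z j.+1 <= zext z j.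

Definition in_B (d : nat) (p : 'I_d.+1 -> R) (x : R) (z : 'I_d -> R) : Prop :=
  x = p ord0 + \sum_(j < d) (p (inord j.+1) - p (inord j)) * z j /\ in_Delta z.

Variable n : nat.
Variable d : 'I_n -> nat.

(* staircases: sequences of pairs (pi_t(1), pi_t(2)) *)
Definition is_staircase (pi : seq ('I_n * nat)) : Prop :=
  (forall i : 'I_n, count (fun q => q.1 == i) pi = d i) /\
  (forall t : 'I_(size pi),
      (tnth (in_tuple pi) t).2 =
      count (fun q => q.1 == (tnth (in_tuple pi) t).1) (take t.+1 pi)).

Definition jrep (pi : seq ('I_n * nat)) (t : nat) : 'I_n -> nat :=
  fun i => count (fun q => q.1 == i) (take t pi).

Variable p : forall i : 'I_n, 'I_(d i).+1 -> R.
Variable f : 'I_n -> R -> R.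
Variable phi : ('I_n -> R) -> R.
Variable sigma : forall i : 'I_n, {perm 'I_(d i).+1}.

(* psi^sigma(j) = phi(f_1(p_{1,sigma_1(j_1)}), ..., f_n(p_{n,sigma_n(j_n)})),
   for j in G (nat coordinates j_i <= d_i, read as elements of 'I_(d_i).+1) *)
Definition psi (j : 'I_n -> nat) : R :=
  phi (fun i => f i (@p i (@sigma i (inord (j i))))).

Definition stair_rhs (pi : seq ('I_n * nat)) (z' : forall i : 'I_n, 'I_(d i) -> R) : R :=
  psi (jrep pi 0) +
  \sum_(t < size pi)
     (psi (jrep pi t.+1) - psi (jrep pi t)) *
       zext (z' (tnth (in_tuple pi) t).1) (tnth (in_tuple pi) t).2.

Definition LPrelax (x : 'I_n -> R) (z : forall i : 'I_n, 'I_(d i) -> R) (mu : R) : Prop :=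
  (forall i, in_B (@p i) (x i) (z i)) /\
  exists z' : forall i : 'I_n, 'I_(d i) -> R,
    (* z' = (L^sigma)^{-1}(z), i.e. L^sigma(z') = z *)
    (forall i k, Lsig (@sigma i) (z' i) k = z i k) /\
    (forall pi, is_staircase pi -> mu <= stair_rhs pi z').

Definition binaryz (z : forall i : 'I_n, 'I_(d i) -> R) : Prop :=
  forall i k, z i k = 0 \/ z i k = 1.

Definition Eset x z mu : Prop := LPrelax x z mu /\ binaryz z.

Definition hypograph (x : 'I_n -> R) (mu : R) : Prop :=
  (forall i, exists j : 'I_(d i).+1, x i = @p i j) /\ mu <= phi (fun i => f i (x i)).

Definition is_vertex_LP x z mu : Prop :=
  LPrelax x z mu /\
  forall x1 z1 mu1 x2 z2 mu2 (t : R),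
    LPrelax x1 z1 mu1 -> LPrelax x2 z2 mu2 -> 0 < t < 1 ->
    (forall i, x i = t * x1 i + (1 - t) * x2 i) ->
    (forall i k, z i k = t * z1 i k + (1 - t) * z2 i k) ->
    mu = t * mu1 + (1 - t) * mu2 ->
    (forall i, x1 i = x2 i) /\ (forall i k, z1 i k = z2 i k) /\ mu1 = mu2.

Definition ideal_MIP_formulation_of_hypograph : Prop :=
  (forall x mu, hypograph x mu <-> exists z, Eset x z mu) /\
  (forall x z mu, is_vertex_LP x z mu -> binaryz z).

End Defs.

Definition in_box (R : realType) (n : nat) (L U : 'I_n -> R) (a : 'I_n -> R) : Prop :=
  forall i, L i <= a i <= U i.

Definition supermodular_on_box (R : realType) (n : nat) (L U : 'I_n -> R)
  (phi : ('I_n -> R) -> R) : Prop :=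
  forall a b, in_box L U a -> in_box L U b ->
    phi a + phi b <= phi (fun i => Num.max (a i) (b i)) + phi (fun i => Num.min (a i) (b i)).

(* Main.v *)
Require Import Defs.
From HB Require Import structures.
From mathcomp Require Import all_boot all_order all_algebra.
From mathcomp Require Import fingroup perm.
From mathcomp Require Import reals.
From mathcomp Require Import zify ring lra.
From Stdlib Require Import FunctionalExtensionality Classical.
Import Order.TTheory GRing.Theory Num.Theory.
Local Open Scope ring_scope.
Set Implicit Arguments. Unset Strict Implicit. Unset Printing Implicit Defensive.
Section LMap.
Variable R : realType.
Variable d : nat.
Implicit Types (z w a b : 'I_d -> R) (lam : 'I_d.+1 -> R).

Lemma zextS z (j : 'I_d) : zext z j.+1 = z j.
Proof. by rewrite /zext /= valK. Qed.

Lemma zext_out z j : (d < j)%N -> zext z j = 0.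
Proof.
case: j => // j lt; rewrite /zext /= insubF //; apply/negbTE; rewrite -leqNgt; exact lt.
Qed.

Lemma zext_comb t a b j :
  zext (fun k => t * a k + (1 - t) * b k) j = t * zext a j + (1 - t) * zext b j.
Proof.
case: j => [|j]; first by rewrite /zext /=; ring.
rewrite /zext /=; case: insubP => [k _ _|_] /=; ring.
Qed.

Lemma zext_map (h : R -> R) z j : h 0 = 0 -> h 1 = 1 ->
  zext (fun k => h (z k)) j = h (zext z j).
Proof.
move=> h0 h1; case: j => [|j]; first by rewrite /zext /=.
by rewrite /zext /=; case: insubP => [k _ _|_] /=.
Qed.

Definition ind (k : nat) : 'I_d -> R := fun j => ((j < k)%N)%:R.

Lemma zext_ind k j : (k <= d)%N -> zext (ind k) j = ((j <= k)%N)%:R.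
Proof.
move=> kd; case: j => [|j]; first by rewrite /zext.
rewrite /zext /=; case: insubP => [u _ <-|] //=.
rewrite -leqNgt => dj.
have -> : (j < k)%N = false by apply/negbTE; rewrite -leqNgt; exact: leq_trans kd dj.
by [].
Qed.

Lemma Tmap_ind (k : 'I_d.+1) : Tmap (ind k) = fun j => ((j == k))%:R.
Proof.
apply: functional_extensionality => j; rewrite /Tmap !zext_ind; last first.
- by rewrite -ltnS.
- by rewrite -ltnS.
have -> : (j == k) = (j == k :> nat) by [].
case: (leqP j k) => h1; case: (ltnP j k) => h2; case: eqP => h3 /=; try lia; lra.
Qed.

Lemma Pmap_eq (s : {perm 'I_d.+1}) lam j : Pmap s lam j = lam ((s^-1)%g j).
Proof.
rewrite /Pmap (bigD1 ((s^-1)%g j)) //= permKV eqxx mul1r big1 ?addr0 // => k hk.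
rewrite ifN ?mul0r //; apply: contra hk => /eqP ->; by rewrite permK.
Qed.

Lemma sumT w : \sum_(j < d.+1) Tmap w j = 1.
Proof.
rewrite /Tmap -(big_mkord xpredT (fun j => zext w j - zext w j.+1)).
rewrite (eq_bigr (fun j => - (zext w j.+1 - zext w j))); last by move=> *; rewrite opprB.
by rewrite sumrN telescope_sumr // zext_out // opprB subr0.
Qed.

Lemma sumP (s : {perm 'I_d.+1}) lam : \sum_j Pmap s lam j = \sum_j lam j.
Proof.
rewrite (eq_bigr _ (fun j _ => Pmap_eq s lam j)).
by rewrite [RHS](reindex_inj (@perm_inj _ (s^-1)%g)).
Qed.

Lemma zext_Tinv lam : \sum_j lam j = 1 -> forall j, (j <= d.+1)%N ->
  zext (Tinv lam) j = \sum_(k < d.+1 | (j <= k)%N) lam k.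
Proof.
move=> H [|j] hj; first by rewrite /zext /= -H; apply: eq_bigl.
case: (ltnP j d) => h.
  by rewrite (zextS _ (Ordinal h)).
rewrite zext_out // big_pred0 // => k; apply/negbTE; rewrite -ltnNge.
exact: leq_trans (ltn_ord k) _.
Qed.

Lemma TTinv lam : \sum_j lam j = 1 -> Tmap (Tinv lam) = lam.
Proof.
move=> H; apply: functional_extensionality => j.
rewrite /Tmap !zext_Tinv //; last exact: ltnW.
rewrite (bigD1 j) //=.
have -> : \sum_(i < d.+1 | (j <= i)%N && (i != j)) lam i = \sum_(i < d.+1 | (j < i)%N) lam i.
  by apply: eq_bigl => k; rewrite ltn_neqAle andbC eq_sym.
by rewrite addrK.
Qed.

Lemma TinvT w : Tinv (Tmap w) = w.
Proof.
apply: functional_extensionality => j; rewrite /Tinv /Tmap.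
rewrite (eq_bigl (fun k : 'I_d.+1 => xpredT k && (j.+1 <= k)%N)) //.
rewrite -(big_geq_mkord j.+1 d.+1 xpredT (fun k => zext w k - zext w k.+1)).
rewrite (eq_bigr (fun k => - (zext w k.+1 - zext w k))); last by move=> *; rewrite opprB.
by rewrite sumrN (telescope_sumr _ (leqW (ltn_ord j))) zextS zext_out // opprB subr0.
Qed.

Lemma PmapK (s : {perm 'I_d.+1}) lam : Pmap (s^-1)%g (Pmap s lam) = lam.
Proof.
apply: functional_extensionality => j; by rewrite !Pmap_eq invgK permK.
Qed.

Lemma Lsig_inv (s : {perm 'I_d.+1}) w : Lsig (s^-1)%g (Lsig s w) = w.
Proof. by rewrite /Lsig TTinv ?sumP ?sumT // PmapK TinvT. Qed.

Lemma Lsig_ind (s : {perm 'I_d.+1}) (k : 'I_d.+1) : Lsig s (ind k) = ind (s k).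
Proof.
rewrite /Lsig Tmap_ind.
have -> : Pmap s (fun j => (j == k)%:R) = (fun j => (j == s k)%:R :> R).
  apply: functional_extensionality => j; rewrite Pmap_eq.
  by rewrite -(inj_eq (@perm_inj _ s)) permKV.
apply: functional_extensionality => j; rewrite /Tinv /ind.
case: (ltnP j (s k)) => h.
  rewrite (bigD1 (s k)) //= eqxx big1 ?addr0 // => i /andP [_ /negbTE ->] //.
rewrite big1 // => i hi; case: eqP => // e; subst i; by rewrite ltnNge h in hi.
Qed.

Lemma mono_all z : in_Delta z -> forall j, zext z j.+1 <= zext z j.
Proof.
move=> hz j; case: (leqP j d) => h; first exact: hz.
by rewrite !zext_out // ltnW.
Qed.

Lemma chain z : in_Delta z -> forall i j, (i <= j)%N -> zext z j <= zext z i.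
Proof.
move=> hz i; elim=> [|j IH]; first by rewrite leqn0 => /eqP ->.
rewrite leq_eqVlt => /orP [/eqP -> //| hij].
exact: le_trans (mono_all hz j) (IH hij).
Qed.

Lemma zext_bounds z : in_Delta z -> forall j, 0 <= zext z j <= 1.
Proof.
move=> hz j; apply/andP; split; last first.
  by have := chain hz (leq0n j); rewrite /zext.
case: (leqP j d.+1) => h.
  by have := chain hz h; rewrite (zext_out z (ltnSn d)).
by rewrite zext_out // ltnW.
Qed.

Lemma Delta_bounds z : in_Delta z -> forall j, 0 <= z j <= 1.
Proof. by move=> hz j; rewrite -zextS zext_bounds. Qed.

Lemma Lsig_Delta (s : {perm 'I_d.+1}) w : in_Delta w -> in_Delta (Lsig s w).
Proof.
move=> hw j jd; rewrite /Lsig.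
have hs : \sum_j Pmap s (Tmap w) j = 1 by rewrite sumP sumT.
have hpos : forall k, 0 <= Pmap s (Tmap w) k.
  move=> k; rewrite Pmap_eq /Tmap subr_ge0; apply: hw; by rewrite -ltnS.
rewrite (zext_Tinv hs (jd : (j.+1 <= d.+1)%N)) (zext_Tinv hs (leqW jd)).
have jd' : (j < d.+1)%N by [].
rewrite [X in _ <= X](bigD1 (Ordinal jd')) //=.
have -> : \sum_(i < d.+1 | (j <= i)%N && (i != Ordinal jd')) Pmap s (Tmap w) i
   = \sum_(i < d.+1 | (j < i)%N) Pmap s (Tmap w) i.
  by apply: eq_bigl => k; rewrite ltn_neqAle andbC eq_sym.
by rewrite lerDr.
Qed.

Lemma Lsig_comb (s : {perm 'I_d.+1}) t a b j :
  Lsig s (fun k => t * a k + (1 - t) * b k) j = t * Lsig s a j + (1 - t) * Lsig s b j.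
Proof.
rewrite /Lsig /Tinv.
rewrite (eq_bigr (fun k => t * Pmap s (Tmap a) k + (1 - t) * Pmap s (Tmap b) k)).
  by rewrite big_split /= -!mulr_sumr.
by move=> k _; rewrite !Pmap_eq /Tmap !zext_comb; ring.
Qed.

Lemma bin_ind w : in_Delta w -> (forall j, w j = 0 \/ w j = 1) ->
  exists k : 'I_d.+1, forall j, w j = ind k j.
Proof.
move=> hw hb.
set k := find (fun j => zext w j.+1 == 0) (iota 0 d).
have kd : (k <= d)%N by rewrite -[X in (_ <= X)%N](size_iota 0 d) find_size.
exists (Ordinal (kd : (k < d.+1)%N)) => j; rewrite /ind /=.
case: (ltnP j k) => hjk.
  have := before_find 0 hjk; rewrite nth_iota ?add0n; last exact: leq_trans hjk kd.
  rewrite (zextS w j) => /negbT /eqP hne.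
  by case: (hb j).
have kd' : (k < d)%N by apply: leq_trans (ltn_ord j).
have : has (fun j => zext w j.+1 == 0) (iota 0 d) by rewrite has_find size_iota.
move=> /(nth_find 0); rewrite -/k nth_iota // add0n => /eqP hk0.
have := chain hw (hjk : (k.+1 <= j.+1)%N); rewrite hk0 zextS => hle.
have := Delta_bounds hw j => /andP [h0 _] /=.
by apply/eqP; rewrite eq_le hle h0.
Qed.

Lemma x_ind (p : 'I_d.+1 -> R) (k : 'I_d.+1) :
  p ord0 + \sum_(j < d) (p (inord j.+1) - p (inord j)) * ind k j = p k.
Proof.
rewrite /ind.
rewrite (eq_bigr (fun j : 'I_d => if (j < k)%N then (p (inord j.+1) - p (inord j)) else 0)); last first.
  by move=> j _; case: ifP; rewrite ?mulr1 ?mulr0.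
rewrite -big_mkcond /=.
rewrite -(big_ord_widen d (fun j => p (inord j.+1) - p (inord j))); last by rewrite -ltnS.
rewrite -(big_mkord xpredT (fun i => p (inord i.+1) - p (inord i))) telescope_sumr // inord_val.
have -> : inord 0 = ord0 :> 'I_d.+1 by apply: val_inj; rewrite /= inordK.
by rewrite addrC subrK.
Qed.

Lemma Delta_ind k : (k <= d)%N -> in_Delta (ind k).
Proof.
move=> kd j jd; rewrite !zext_ind // ler_nat.
by case h: (j < k)%N => //=; rewrite (ltnW h).
Qed.

End LMap.
Section Comb.
Variable R : realType.
Variable n : nat.
Variable d : 'I_n -> nat.
Variable p : forall i : 'I_n, 'I_(d i).+1 -> R.
Variable f : 'I_n -> R -> R.
Variable phi : ('I_n -> R) -> R.
Variable sigma : forall i : 'I_n, {perm 'I_(d i).+1}.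

Local Notation ps := (psi p f phi sigma).

Definition addv (J : 'I_n -> nat) (a : 'I_n) : 'I_n -> nat := fun i => (J i + (i == a))%N.

Lemma psi_ext (J K : 'I_n -> nat) : (forall i, J i = K i) -> ps J = ps K.
Proof. by move=> h; have -> : J = K by apply: functional_extensionality. Qed.

Implicit Type w : forall i : 'I_n, 'I_(d i) -> R.

Fixpoint Fw w (J : 'I_n -> nat) (s : seq 'I_n) : R :=
  match s with
  | [::] => 0
  | a :: s' => (ps (addv J a) - ps J) * zext (w a) (J a).+1 + Fw w (addv J a) s'
  end.

Fixpoint consw w (J : 'I_n -> nat) (s : seq 'I_n) : Prop :=
  match s with
  | [::] => True
  | a :: s' => (forall b, b \in a :: s' -> zext (w b) (J b).+1 <= zext (w a) (J a).+1)
               /\ consw w (addv J a) s'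
  end.

Definition bounded (J : 'I_n -> nat) (s : seq 'I_n) := forall i, (J i + count (pred1 i) s <= d i)%N.

Definition monow w := forall i, in_Delta (w i).

Definition psi_super := forall J K : 'I_n -> nat, (forall i, J i <= d i)%N -> (forall i, K i <= d i)%N ->
  ps J + ps K <= ps (fun i => maxn (J i) (K i)) + ps (fun i => minn (J i) (K i)).

Lemma swap_le w J a b t : psi_super -> a != b -> (J a < d a)%N -> (J b < d b)%N ->
  (forall i, J i <= d i)%N ->
  zext (w b) (J b).+1 <= zext (w a) (J a).+1 -> Fw w J (a :: b :: t) <= Fw w J (b :: a :: t).
Proof.
move=> hs hab ha hb hJ hW /=.
have e1 : addv J a b = J b by rewrite /addv eq_sym (negbTE hab) addn0.
have e2 : addv J b a = J a by rewrite /addv (negbTE hab) addn0.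
have e3 : addv (addv J a) b = addv (addv J b) a.
  by apply: functional_extensionality => i; rewrite /addv -!addnA [((i == b) + _)%N]addnC.
rewrite e1 e2 e3.
have hD : ps (addv J a) + ps (addv J b) <= ps (addv (addv J b) a) + ps J.
  have -> : ps (addv (addv J b) a) = ps (fun i => maxn (addv J a i) (addv J b i)).
    apply: psi_ext => i; rewrite /addv; case: (eqVneq i a) => [->|hia];
      rewrite ?eqxx ?(negbTE hab) ?(negbTE hia) /=; try case: (eqVneq i b) => _; lia.
  have -> : ps J = ps (fun i => minn (addv J a i) (addv J b i)).
    apply: psi_ext => i; rewrite /addv; case: (eqVneq i a) => [->|hia];
      rewrite ?eqxx ?(negbTE hab) ?(negbTE hia) /=; try case: (eqVneq i b) => _; lia.
  apply: hs => i; rewrite /addv; move: (hJ i);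
    case: (eqVneq i a) => [->|hia]; rewrite ?(negbTE hab) /=; try lia;
    case: (eqVneq i b) => [->|hib] /=; lia.
have h1 : 0 <= zext (w a) (J a).+1 - zext (w b) (J b).+1 by rewrite subr_ge0.
have h2 : 0 <= ps (addv (addv J b) a) + ps J - (ps (addv J a) + ps (addv J b)) by rewrite subr_ge0.
have hP := mulr_ge0 h1 h2.
nra.
Qed.

Lemma bubble w : psi_super -> monow w -> forall u J a v, a \notin u ->
  (forall b, b \in u -> zext (w b) (J b).+1 <= zext (w a) (J a).+1) ->
  bounded J (u ++ a :: v) -> Fw w J (a :: u ++ v) <= Fw w J (u ++ a :: v).
Proof.
move=> hs hm; elim=> [|b u IH] J a v hau hu hb; first by [].
move: hau; rewrite in_cons negb_or => /andP [hab hau].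
have hJ : forall i, (J i <= d i)%N by move=> i; have := hb i; lia.
have hJa : (J a < d a)%N.
  have := hb a; rewrite count_cat /= eqxx; lia.
have hJb : (J b < d b)%N.
  have := hb b; rewrite /= eqxx; lia.
apply: le_trans (swap_le _ hs hab hJa hJb hJ (hu b (mem_head _ _))) _.
rewrite [X in _ <= X]/= [X in X <= _]/= lerD2l.
apply: IH => //.
- move=> c hc; rewrite {2}/addv (negbTE hab) addn0.
  apply: le_trans (hu c _); last by rewrite in_cons hc orbT.
  apply: chain; first exact: hm.
  by rewrite /addv; lia.
- move=> i; have := hb i; rewrite /addv /= eq_sym; lia.
Qed.

Lemma split_first (T : eqType) (a : T) s : a \in s -> exists u v, s = u ++ a :: v /\ a \notin u.
Proof.
elim: s => // x s IH; rewrite in_cons; case: eqP => [-> _| hne /= h].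
  by exists [::], s.
have [u [v [-> hu]]] := IH h; exists (x :: u), v; split => //.
rewrite in_cons negb_or hu andbT; apply/eqP => e; by apply: hne.
Qed.

Lemma bounded_perm J s s' : perm_eq s s' -> bounded J s -> bounded J s'.
Proof. by move=> hp hb i; rewrite -((seq.permP hp) (pred1 i)). Qed.

Lemma Mlemma w : psi_super -> monow w -> forall s J s', consw w J s -> perm_eq s s' ->
  bounded J s -> Fw w J s <= Fw w J s'.
Proof.
move=> hs hm; elim=> [|a s IH] J s' hc hp hb.
  by move: hp; rewrite perm_sym => /perm_nilP ->.
have as' : a \in s' by rewrite -(perm_mem hp) mem_head.
have [u [v [es hau]]] := split_first as'; subst s'.
apply: le_trans (bubble hs hm hau _ (bounded_perm hp hb)); last first.
  move=> b hbu; apply: hc.1; by rewrite (perm_mem hp) mem_cat hbu.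
rewrite /= lerD2l; apply: IH.
- exact: hc.2.
- have h2 : perm_eq (u ++ a :: v) (a :: u ++ v).
    by apply/seq.permP => q; rewrite /= !count_cat /=; lia.
  have := perm_trans hp h2; by rewrite perm_cons.
- move=> i; have := hb i; rewrite /addv /= eq_sym; lia.
Qed.


Lemma greedy w : forall m (J : 'I_n -> nat) (r : 'I_n -> nat), (\sum_i r i)%N = m ->
  exists s, (forall i, count (pred1 i) s = r i) /\ consw w J s.
Proof.
elim=> [|m IH] J r hr.
  exists [::]; split => // i /=.
  by move: hr; rewrite (bigD1 i) //=; lia.
case: (pickP (fun i => 0 < r i)%N) => [a ha|hno]; last first.
  move: hr; rewrite big1 // => i _.
  by move/negbT: (hno i); rewrite -leqNgt leqn0 => /eqP.
case: (@arg_maxP _ _ _ a [pred i | 0 < r i]%N (fun i => zext (w i) (J i).+1) ha) => b hb hmax.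
rewrite /= in hb.
set r' := fun i => (r i - (i == b))%N.
have hr' : (\sum_i r' i)%N = m.
  rewrite (bigD1 b) //= (eq_bigr r) => [|i /negbTE hib]; last by rewrite /r' hib subn0.
  move: hr; rewrite (bigD1 b) //= /r' eqxx; lia.
have [s [hs hc]] := IH (addv J b) r' hr'.
exists (b :: s); split.
  move=> i; rewrite /= hs /r' eq_sym; case: eqP => [->|_]; lia.
split => //.
move=> c; rewrite in_cons => /orP [/eqP -> //| hc'].
apply: hmax.
have : (0 < count (pred1 c) s)%N by rewrite -has_count has_pred1.
rewrite hs /r' /=; lia.
Qed.

Lemma Fw_zero w (K : 'I_n -> nat) : (forall i k, zext (w i) k = ((k <= K i)%N)%:R) ->
  forall s J, (forall b, b \in s -> K b <= J b)%N -> Fw w J s = 0.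
Proof.
move=> hW; elim=> [|a s IH] J hKJ //=.
have ha := hKJ a (mem_head _ _).
rewrite hW.
have -> : ((J a).+1 <= K a)%N = false by apply/negbTE; rewrite -ltnNge ltnS.
rewrite mulr0 add0r; apply: IH => b hb.
have := hKJ b; rewrite in_cons hb orbT /addv => /(_ isT); lia.
Qed.

Lemma Fw_bin w (K : 'I_n -> nat) : (forall i k, zext (w i) k = ((k <= K i)%N)%:R) ->
  (forall i, K i <= d i)%N ->
  forall s J, consw w J s -> (forall i, J i + count (pred1 i) s = d i)%N ->
  (forall i, J i <= K i)%N -> Fw w J s = ps K - ps J.
Proof.
move=> hW hK; elim=> [|a s IH] J hc hcnt hJK.
  rewrite /= (@psi_ext K J) ?subrr // => i; have := hcnt i; have := hK i; have := hJK i.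
  rewrite /=; lia.
case: (ltnP (J a) (K a)) => h.
  rewrite /= hW h mulr1 (IH (addv J a)).
  - by ring.
  - exact: hc.2.
  - move=> i; have := hcnt i; rewrite /addv /= eq_sym; lia.
  - move=> i; rewrite /addv; case: eqP => [->|_]; have := hJK i; lia.
have hfa : ((J a).+1 <= K a)%N = false by apply/negbTE; rewrite -ltnNge ltnS.
have hin : forall b, b \in a :: s -> (K b <= J b)%N.
  move=> b hb; have := hc.1 b hb; rewrite !hW hfa.
  case: leqP => // hlt; by rewrite ler_nat.
rewrite (Fw_zero hW hin) (@psi_ext K J) ?subrr // => i.
case: (boolP (i \in a :: s)) => hi.
  have := hin i hi; have := hJK i; lia.
have := hcnt i; move/count_memPn: hi => ->; have := hK i; have := hJK i; lia.
Qed.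

Lemma psi_super_of (L U : 'I_n -> R) : supermodular_on_box L U phi ->
  (forall (i : 'I_n) (j : 'I_(d i).+1), L i <= f i (@p i j) <= U i) ->
  (forall i (j k : 'I_(d i).+1), (j <= k)%N -> f i (@p i (sigma i j)) <= f i (@p i (sigma i k))) ->
  psi_super.
Proof.
move=> hsup hbox hmono J K hJ hK; rewrite /psi.
set g := fun i (k : nat) => f i (@p i (sigma i (inord k))).
have gm : forall i x y, (x <= y)%N -> (x <= d i)%N -> (y <= d i)%N -> g i x <= g i y.
  by move=> i x y hxy hx hy; apply: hmono; rewrite !inordK // ltnS.
have := hsup (fun i => g i (J i)) (fun i => g i (K i)) (fun i => hbox i _) (fun i => hbox i _).
have -> : (fun i => Num.max (g i (J i)) (g i (K i))) = (fun i => g i (maxn (J i) (K i))).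
  apply: functional_extensionality => i; case: (leqP (J i) (K i)) => h.
    by rewrite max_r // gm.
  by rewrite max_l // gm // ltnW.
have -> : (fun i => Num.min (g i (J i)) (g i (K i))) = (fun i => g i (minn (J i) (K i))).
  apply: functional_extensionality => i; case: (leqP (J i) (K i)) => h.
    by rewrite min_l // gm.
  by rewrite min_r // gm // ltnW.
by [].
Qed.

Lemma consw_map w w' J s :
  (forall i k i' k', zext (w i) k <= zext (w i') k' -> zext (w' i) k <= zext (w' i') k') ->
  consw w J s -> consw w' J s.
Proof.
move=> hm; elim: s J => [|a s IH] J //= [h1 h2]; split; last exact: IH.
by move=> b hb; apply: hm; apply: h1.
Qed.

Lemma Fw_comb w w1 w2 : (forall i k, zext (w1 i) k + zext (w2 i) k = 2 * zext (w i) k) ->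
  forall s J, Fw w1 J s + Fw w2 J s = 2 * Fw w J s.
Proof.
move=> h; elim=> [|a s IH] J /=; first by ring.
have := IH (addv J a); have := h a (J a).+1.
set A := zext (w1 a) _; set B := zext (w2 a) _; set C := zext (w a) _.
set F1 := Fw w1 _ s; set F2 := Fw w2 _ s; set F := Fw w _ s.
move=> e1 e2.
have -> : (ps (addv J a) - ps J) * A + F1 + ((ps (addv J a) - ps J) * B + F2)
  = (ps (addv J a) - ps J) * (A + B) + (F1 + F2) by ring.
rewrite e1 e2; ring.
Qed.

Lemma sumF w (a0 : 'I_n) : forall s J,
  \sum_(t < size s) (ps (fun i => J i + count (pred1 i) (take t.+1 s))%N
                    - ps (fun i => J i + count (pred1 i) (take t s))%N)
     * zext (w (nth a0 s t)) (J (nth a0 s t) + count (pred1 (nth a0 s t)) (take t s)).+1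
  = Fw w J s.
Proof.
elim=> [|a s IH] J; first by rewrite big_ord0.
have -> : Fw w J (a :: s) = (ps (addv J a) - ps J) * zext (w a) (J a).+1 + Fw w (addv J a) s by [].
rewrite big_ord_recl -(IH (addv J a)).
congr (_ + _).
  have e0 : forall i, count (pred1 i) (take 0 (a :: s)) = 0%N by move=> i; rewrite take0.
  have e1 : forall i, count (pred1 i) (take 1 (a :: s)) = (a == i) by move=> i /=; rewrite take0 addn0.
  have e2 : nth a0 (a :: s) (@ord0 (size s)) = a by [].
  rewrite e2 e0 addn0; congr (_ * _); congr (_ - _); apply: psi_ext => i.
    by rewrite e1 /addv eq_sym.
  by rewrite e0 addn0.
apply: eq_bigr => t _.
have -> : (lift ord0 t : nat) = t.+1 by [].
have En : nth a0 (a :: s) t.+1 = nth a0 s t by [].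
have Ec : forall k i, count (pred1 i) (take k.+1 (a :: s)) = ((a == i) + count (pred1 i) (take k s))%N by [].
rewrite En !Ec.
have e : forall u i, (J i + ((a == i) + count (pred1 i) u) = addv J a i + count (pred1 i) u)%N.
  by move=> u i; rewrite /addv eq_sym addnA.
rewrite e; congr (_ * _); congr (_ - _); apply: psi_ext => i; by rewrite ?Ec e.
Qed.

Lemma jrep_eq (pi : seq ('I_n * nat)) t : jrep pi t = (fun i => 0 + count (pred1 i) (take t (map fst pi)))%N.
Proof.
apply: functional_extensionality => i; rewrite /jrep add0n -map_take count_map.
by apply: eq_count.
Qed.

Lemma stair_F w (a0 : 'I_n) pi : is_staircase d pi ->
  stair_rhs p f phi sigma pi w = ps (fun _ => 0%N) + Fw w (fun _ => 0%N) (map fst pi).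
Proof.
case=> hcnt hsnd; rewrite /stair_rhs -(sumF w a0).
rewrite jrep_eq; congr (_ + _).
  by apply: psi_ext => i; rewrite take0.
rewrite size_map; apply: eq_bigr => t _.
rewrite hsnd !jrep_eq (tnth_nth (a0, 0%N)) /=.
have ht : (t < size (map fst pi))%N by rewrite size_map.
have e1 : (nth (a0, 0%N) pi t).1 = nth a0 (map fst pi) t by rewrite (nth_map (a0, 0%N)).
rewrite e1.
have -> : count (fun q : 'I_n * nat => q.1 == nth a0 (map fst pi) t) (take t.+1 pi)
   = (count (pred1 (nth a0 (map fst pi) t)) (take t (map fst pi))).+1.
  have -> : count (fun q : 'I_n * nat => q.1 == nth a0 (map fst pi) t) (take t.+1 pi)
     = count (pred1 (nth a0 (map fst pi) t)) (take t.+1 (map fst pi)).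
    by rewrite -map_take count_map; apply: eq_count.
  by rewrite (take_nth a0 ht) -cats1 count_cat /= eqxx addn0 addn1.
by [].
Qed.

Definition mkpi (a0 : 'I_n) (s : seq 'I_n) : seq ('I_n * nat) :=
  [seq (nth a0 s t, count (pred1 (nth a0 s t)) (take t.+1 s)) | t <- iota 0 (size s)].

Lemma mkpi_fst a0 s : map fst (mkpi a0 s) = s.
Proof. by rewrite /mkpi -map_comp; exact: mkseq_nth. Qed.

Lemma countfst (pi : seq ('I_n * nat)) k x :
  count (fun q : 'I_n * nat => q.1 == x) (take k pi) = count (pred1 x) (take k (map fst pi)).
Proof. by rewrite -map_take count_map; apply: eq_count. Qed.

Lemma mkpi_stair a0 s : (forall i, count (pred1 i) s = d i) -> is_staircase d (mkpi a0 s).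
Proof.
move=> hc; split.
  move=> i; rewrite -(hc i); have e := mkpi_fst a0 s.
  rewrite -[in RHS]e [in RHS]count_map; by apply: eq_count.
move=> t; rewrite (tnth_nth (a0, 0%N)) /= countfst mkpi_fst.
have hsz : size (mkpi a0 s) = size s by rewrite /mkpi size_map size_iota.
have ht : (t < size s)%N by rewrite -hsz.
have hn : nth (a0, 0%N) (mkpi a0 s) t = (nth a0 s t, count (pred1 (nth a0 s t)) (take t.+1 s)).
  by rewrite /mkpi (nth_map 0%N) ?size_iota // nth_iota.
by rewrite hn.
Qed.

End Comb.
Lemma fin_lb (T : finType) (R : realType) (g : T -> R) :
  (forall t, 0 < g t) -> exists e, 0 < e /\ forall t, e <= g t.
Proof.
move=> hg.
suff : forall l : seq T, exists e, 0 < e /\ forall t, t \in l -> e <= g t.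
  by case/(_ (enum T)) => e [he1 he2]; exists e; split => // t; apply: he2; rewrite mem_enum.
elim=> [|a l [e [he1 he2]]]; first by exists 1.
case: (leP (g a) e) => h.
  exists (g a); split => // t; rewrite in_cons => /orP [/eqP -> //| ht].
  exact: le_trans h (he2 t ht).
exists e; split => // t; rewrite in_cons => /orP [/eqP -> //| ht]; first exact: ltW.
exact: he2.
Qed.

Lemma perm_counts (n : nat) (d : 'I_n -> nat) (s : seq 'I_n) pi :
  (forall i, count (pred1 i) s = d i) -> is_staircase d pi -> perm_eq s (map fst pi).
Proof.
move=> hc [hpi _]; apply/allP => x _; apply/eqP.
rewrite hc -(hpi x) count_map; by apply: eq_count.
Qed.

Theorem theorem1 (R : realType) (n : nat) (d : 'I_n -> nat)
  (p : forall i : 'I_n, 'I_(d i).+1 -> R) (f : 'I_n -> R -> R)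
  (L U : 'I_n -> R) (phi : ('I_n -> R) -> R)
  (sigma : forall i : 'I_n, {perm 'I_(d i).+1}) :
  (0 < n)%N ->
  (forall i, 0 < d i)%N ->
  (forall i (j k : 'I_(d i).+1), (j < k)%N -> p i j < p i k) ->
  (forall i (j : 'I_(d i).+1), L i <= f i (p i j) <= U i) ->
  supermodular_on_box L U phi ->
  (forall i (j k : 'I_(d i).+1), (j <= k)%N ->
     f i (p i (sigma i j)) <= f i (p i (sigma i k))) ->
  ideal_MIP_formulation_of_hypograph p f phi sigma.
Proof.
move=> hn hd hp hbox hsup hmono.
have hs : psi_super p f phi sigma := psi_super_of hsup hbox hmono.
pose a0 : 'I_n := Ordinal hn.
pose ps := psi p f phi sigma.
pose FW := Fw p f phi sigma.
have hgreedy : forall w : forall i, 'I_(d i) -> R,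
    exists s, (forall i, count (pred1 i) s = d i) /\ consw w (fun _ => 0%N) s.
  by move=> w; exact: (@greedy _ _ _ w _ (fun _ => 0%N) d (erefl _)).
have key : forall (w : forall i, 'I_(d i) -> R) s pi, monow w ->
    (forall i, count (pred1 i) s = d i) -> consw w (fun _ => 0%N) s -> is_staircase d pi ->
    ps (fun _ => 0%N) + FW w (fun _ => 0%N) s <= stair_rhs p f phi sigma pi w.
  move=> w s pi hw hc hcons hpi.
  rewrite (stair_F p f phi sigma w a0 hpi) lerD2l.
  apply: (Mlemma hs hw hcons (perm_counts hc hpi)).
  by move=> i; rewrite hc add0n.
have binval : forall (w : forall i, 'I_(d i) -> R) (K : 'I_n -> nat) s,
    (forall i k, zext (w i) k = ((k <= K i)%N)%:R) -> (forall i, K i <= d i)%N ->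
    (forall i, count (pred1 i) s = d i) -> consw w (fun _ => 0%N) s ->
    ps (fun _ => 0%N) + FW w (fun _ => 0%N) s = ps K.
  move=> w K s hW hK hc hcons.
  rewrite /FW (Fw_bin p f phi sigma hW hK hcons) //; try by rewrite /ps addrC subrK.
  all: try by move=> i; rewrite add0n hc.
split.
  move=> x mu; split.
  - case=> hx hmu.
    have ex : forall i, exists j : 'I_(d i).+1, x i == p i j.
      by move=> i; have [j ->] := hx i; exists j.
    pose kk := fun i => xchoose (ex i).
    have hkk : forall i, x i = p i (kk i) by move=> i; apply/eqP; exact: xchooseP (ex i).
    pose K := fun i => ((sigma i)^-1)%g (kk i).
    pose w : forall i, 'I_(d i) -> R := fun i => ind R (K i).
    exists (fun i => ind R (kk i)); split; last first.
      by move=> i k; rewrite /ind; case: (_ < _)%N; [right|left].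
    split.
      move=> i; split; last by apply: Delta_ind; rewrite -ltnS ltn_ord.
      by rewrite x_ind hkk.
    exists w; split.
      by move=> i k; rewrite /w Lsig_ind /K permKV.
    move=> pi hpi.
    have [s [hc hcons]] := hgreedy w.
    have hwD : monow w by move=> i; apply: Delta_ind; rewrite -ltnS ltn_ord.
    apply: le_trans (key w s pi hwD hc hcons hpi).
    rewrite (binval w (fun i => K i)) //.
    + apply: le_trans hmu _; rewrite /ps /psi le_eqVlt; apply/orP; left; apply/eqP.
      congr phi; apply: functional_extensionality => i.
      by rewrite inord_val /K permKV hkk.
    + by move=> i k; rewrite /w zext_ind // -ltnS.
    + by move=> i; rewrite -ltnS.
  - case=> z [[hB [w [hL hst]]] hbin].
    have ex : forall i, exists k : 'I_(d i).+1, [forall j, z i j == ind R k j].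
      move=> i; have [k hk] := bin_ind (hB i).2 (hbin i).
      by exists k; apply/forallP => j; rewrite hk.
    pose kk := fun i => xchoose (ex i).
    have hkk : forall i j, z i j = ind R (kk i) j.
      by move=> i j; have /forallP /(_ j) /eqP := xchooseP (ex i).
    have hx : forall i, x i = p i (kk i).
      move=> i; rewrite (hB i).1 -(x_ind (p i) (kk i)); congr (_ + _).
      by apply: eq_bigr => j _; rewrite hkk.
    split; first by move=> i; exists (kk i).
    pose K := fun i => ((sigma i)^-1)%g (kk i).
    have hwK : forall i, w i = ind R (K i).
      move=> i; rewrite -(Lsig_inv (sigma i) (w i)).
      have -> : Lsig (sigma i) (w i) = ind R (kk i).
        by apply: functional_extensionality => j; rewrite hL hkk.
      by rewrite Lsig_ind.
    have [s [hc hcons]] := hgreedy w.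
    have := hst (mkpi a0 s) (mkpi_stair a0 hc).
    rewrite (stair_F p f phi sigma w a0 (mkpi_stair a0 hc)) mkpi_fst.
    rewrite -/ps -/FW (binval w (fun i => K i)) //.
    + move=> hmu; apply: le_trans hmu _; rewrite /ps /psi le_eqVlt; apply/orP; left; apply/eqP.
      congr phi; apply: functional_extensionality => i.
      by rewrite inord_val /K permKV hx.
    + by move=> i k; rewrite hwK zext_ind // -ltnS.
    + by move=> i; rewrite -ltnS.
move=> x z mu [hLP hext].
case: (hLP) => hB [w [hL hst]].
have hwz : forall i, w i = Lsig ((sigma i)^-1)%g (z i).
  move=> i; rewrite -(Lsig_inv (sigma i) (w i)); congr Lsig.
  by apply: functional_extensionality => k; rewrite hL.
have hwD : monow w by move=> i; rewrite hwz; apply: Lsig_Delta; exact: (hB i).2.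
apply: NNPP => hnb.
have [i0 [j0 [hn0 hn1]]] : exists i j, w i j != 0 /\ w i j != 1.
  apply: NNPP => hno; apply: hnb.
  have wbin : forall i j, w i j = 0 \/ w i j = 1.
    move=> i j; case: (boolP (w i j == 0)) => [/eqP ->|h0]; first by left.
    case: (boolP (w i j == 1)) => [/eqP ->|h1]; first by right.
    by exfalso; apply: hno; exists i, j.
  move=> i k; have [kk hk] := bin_ind (hwD i) (wbin i).
  have -> : z i = Lsig (sigma i) (ind R kk).
    apply: functional_extensionality => j; rewrite -hL; congr Lsig.
    by apply: functional_extensionality => j'; rewrite hk.
  by rewrite Lsig_ind /ind; case: (_ < _)%N; [right|left].
set c := w i0 j0.
have [hc0 hc1] : 0 < c /\ c < 1.
  have /andP [h0 h1] := Delta_bounds (hwD i0) j0.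
  by split; rewrite lt_def; [rewrite hn0 h0 | rewrite eq_sym hn1 h1].
pose T := option (option {i : 'I_n & 'I_(d i)}).
pose g := fun t : T => match t with
  | None => c
  | Some None => 1 - c
  | Some (Some u) => if w (tag u) (tagged u) == c then 1 else `|w (tag u) (tagged u) - c| end.
have [e1 [he1 hge]] : exists e, 0 < e /\ forall t, e <= g t.
  apply: fin_lb => -[[u|]|] /=; rewrite ?subr_gt0 //.
  case: eqP => // hne; rewrite normr_gt0 subr_eq0; exact/eqP.
pose eps := e1 / 2.
have heps : 0 < eps by rewrite /eps divr_gt0.
have heps1 : eps < e1 by rewrite /eps; lra.
have hPc : eps < c by have := hge None; rewrite /=; lra.
have hP1c : eps < 1 - c by have := hge (Some None); rewrite /=; lra.
have hPw : forall i j, w i j != c -> eps < `|w i j - c|.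
  move=> i j hne; have := hge (Some (Some (Tagged (fun i => 'I_(d i)) j))).
  rewrite /= (negbTE hne); lra.
have hPz : forall i k, zext (w i) k != c -> eps < `|zext (w i) k - c|.
  move=> i [|k]; rewrite /zext /=.
    by move=> _; rewrite gtr0_norm ?subr_gt0 //.
  case: insubP => [j _ _|_] /=; first exact: hPw.
  by move=> _; rewrite sub0r normrN gtr0_norm.
pose h1 := fun y : R => if y == c then y + eps else y.
pose h2 := fun y : R => if y == c then y - eps else y.
have h10 : h1 0 = 0 by rewrite /h1 ifN // eq_sym; apply/eqP => e; move: hc0; rewrite e ltxx.
have h11 : h1 1 = 1 by rewrite /h1 ifN // eq_sym; apply/eqP => e; move: hc1; rewrite e ltxx.
have h20 : h2 0 = 0 by rewrite /h2 ifN // eq_sym; apply/eqP => e; move: hc0; rewrite e ltxx.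
have h21 : h2 1 = 1 by rewrite /h2 ifN // eq_sym; apply/eqP => e; move: hc1; rewrite e ltxx.
have hm1 : forall u v, (u != c -> eps < `|u - c|) -> (v != c -> eps < `|v - c|) -> u <= v -> h1 u <= h1 v.
  move=> u v Pu Pv huv; rewrite /h1; case: eqP => hu; case: eqP => hv.
  - lra.
  - have hcv : c < v by rewrite lt_def -hu huv andbT; apply/eqP => e; apply: hv; rewrite e.
    have := Pv (introN eqP hv); rewrite gtr0_norm ?subr_gt0 //; lra.
  - lra.
  - exact: huv.
have hm2 : forall u v, (u != c -> eps < `|u - c|) -> (v != c -> eps < `|v - c|) -> u <= v -> h2 u <= h2 v.
  move=> u v Pu Pv huv; rewrite /h2; case: eqP => hu; case: eqP => hv.
  - lra.
  - lra.
  - have huc : u < c by rewrite lt_def -hv huv andbT; apply/eqP => e; apply: hu; rewrite -e.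
    have := Pu (introN eqP hu); rewrite ltr0_norm ?subr_lt0 //; lra.
  - exact: huv.
pose w1 : forall i, 'I_(d i) -> R := fun i j => h1 (w i j).
pose w2 : forall i, 'I_(d i) -> R := fun i j => h2 (w i j).
have ez1 : forall i k, zext (w1 i) k = h1 (zext (w i) k) by move=> i k; rewrite zext_map.
have ez2 : forall i k, zext (w2 i) k = h2 (zext (w i) k) by move=> i k; rewrite zext_map.
have tr1 : forall i k i' k', zext (w i) k <= zext (w i') k' -> zext (w1 i) k <= zext (w1 i') k'.
  by move=> i k i' k' h; rewrite !ez1; apply: hm1 => //; apply: hPz.
have tr2 : forall i k i' k', zext (w i) k <= zext (w i') k' -> zext (w2 i) k <= zext (w2 i') k'.
  by move=> i k i' k' h; rewrite !ez2; apply: hm2 => //; apply: hPz.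
have hw1D : monow w1 by move=> i j hj; apply: tr1; exact: hwD.
have hw2D : monow w2 by move=> i j hj; apply: tr2; exact: hwD.
have [s [hc hcons]] := hgreedy w.
have hcons1 : consw w1 (fun _ => 0%N) s := consw_map tr1 hcons.
have hcons2 : consw w2 (fun _ => 0%N) s := consw_map tr2 hcons.
have hmuw : mu <= ps (fun _ => 0%N) + FW w (fun _ => 0%N) s.
  have := hst (mkpi a0 s) (mkpi_stair a0 hc).
  by rewrite (stair_F p f phi sigma w a0 (mkpi_stair a0 hc)) mkpi_fst.
have hcomb : FW w1 (fun _ => 0%N) s + FW w2 (fun _ => 0%N) s = 2 * FW w (fun _ => 0%N) s.
  apply: Fw_comb => i k; rewrite ez1 ez2 /h1 /h2; case: eqP => _; lra.
pose z1 : forall i, 'I_(d i) -> R := fun i => Lsig (sigma i) (w1 i).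
pose z2 : forall i, 'I_(d i) -> R := fun i => Lsig (sigma i) (w2 i).
pose x1 := fun i => p i ord0 + \sum_(j < d i) (p i (inord j.+1) - p i (inord j)) * z1 i j.
pose x2 := fun i => p i ord0 + \sum_(j < d i) (p i (inord j.+1) - p i (inord j)) * z2 i j.
pose mu1 := mu + FW w1 (fun _ => 0%N) s - FW w (fun _ => 0%N) s.
pose mu2 := mu + FW w2 (fun _ => 0%N) s - FW w (fun _ => 0%N) s.
have hLP1 : LPrelax p f phi sigma x1 z1 mu1.
  split; first by move=> i; split => //; apply: Lsig_Delta; exact: hw1D.
  exists w1; split => // pi hpi.
  have := key w1 s pi hw1D hc hcons1 hpi; rewrite /mu1; lra.
have hLP2 : LPrelax p f phi sigma x2 z2 mu2.
  split; first by move=> i; split => //; apply: Lsig_Delta; exact: hw2D.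
  exists w2; split => // pi hpi.
  have := key w2 s pi hw2D hc hcons2 hpi; rewrite /mu2; lra.
have hz : forall i k, z i k = 1 / 2 * z1 i k + (1 - 1 / 2) * z2 i k.
  move=> i k; rewrite -hL /z1 /z2 -Lsig_comb; congr Lsig.
  by apply: functional_extensionality => j; rewrite /w1 /w2 /h1 /h2; case: eqP => _; lra.
have ht : 0 < (1 / 2 : R) < 1 by apply/andP; split; lra.
have hx : forall i, x i = 1 / 2 * x1 i + (1 - 1 / 2) * x2 i.
  move=> i; rewrite (hB i).1 /x1 /x2.
  rewrite (eq_bigr (fun j : 'I_(d i) => 1 / 2 * ((p i (inord j.+1) - p i (inord j)) * z1 i j)
       + (1 - 1 / 2) * ((p i (inord j.+1) - p i (inord j)) * z2 i j))); last first.
    by move=> j _; rewrite hz; ring.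
  rewrite big_split /= -!mulr_sumr; ring.
have hmu : mu = 1 / 2 * mu1 + (1 - 1 / 2) * mu2 by rewrite /mu1 /mu2; lra.
have [_ [hzz _]] := hext x1 z1 mu1 x2 z2 mu2 (1 / 2) hLP1 hLP2 ht hx hz hmu.
have e12 : w1 i0 = w2 i0.
  rewrite -(Lsig_inv (sigma i0) (w1 i0)) -(Lsig_inv (sigma i0) (w2 i0)); congr Lsig.
  by apply: functional_extensionality => k; apply: hzz.
have := congr1 (fun g => g j0) e12; rewrite /w1 /w2 /h1 /h2 -/c eqxx; lra.
Qed.
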